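(* Let $\mathbf q^{CAV}=(q^{CAV}_1,\dots,q^{CAV}_R)$ be route flows with $q^{CAV}=\sum_rq^{CAV}_r>0$ and $\mathbf t^{CAV}=(t^{CAV}_1,\dots,t^{CAV}_R)$ the corresponding positive route travel times; let $t_{min}=\min_rt^{CAV}_r$, $t_{max}=\max_rt^{CAV}_r$ and $\overline{t^{CAV}}=\frac1{q^{CAV}}\sum_rq^{CAV}_rt^{CAV}_r$. Let $\gamma^F:I\to(0,\infty)$ be a measurable discount factor profile, and for an offer profile $T^{CAV}$ set $u^{HDV}_i=t_{min}$, $u^{CAV}_i=\gamma^F_iT^{CAV}_i$. (i) If there exists a feasible offer profile $T^{CAV}$ subject to $(\mathbf q^{CAV},\mathbf t^{CAV})$ with $u^{CAV}_i\le u^{HDV}_i$ for every $i$, then $\overline{t^{CAV}}\le t_{min}\,\mathbb E(1/\gamma^F)$. (ii) If $R=2$ and $t_{min}/t_{max}\le\gamma^F_i\le1$ for every $i$, then $\overline{t^{CAV}}\le t_{min}\,\mathbb E(1/\gamma^F)$ is also sufficient for the existence of such a feasible offer profile.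
   Context: Drivers form a measure space $(I,di)$ with total mass $|I|=q^{CAV}$ (interval with Lebesgue measure, or $\{1,\dots,q^{CAV}\}$ with counting measure). $\mathbb E(1/\gamma^F)=\frac1{|I|}\int_I\frac1{\gamma^F_i}\,di$. An offer profile subject to $(\mathbf q^{CAV},\mathbf t^{CAV})$ is a measurable $T^{CAV}:I\to[t_{min},t_{max}]$ with $\frac1{|I|}\int_IT^{CAV}_i\,di=\overline{t^{CAV}}$. An assignment plan inducing it is a measurable $\mu:I\times\{1,\dots,R\}\to[0,1]$ with $\int_I\mu(i,r)\,di=q^{CAV}_r$ for every $r$, $\sum_r\mu(i,r)=1$ and $\sum_rt^{CAV}_r\mu(i,r)=T^{CAV}_i$ for a.e. $i$; the profile is feasible if some assignment plan induces it. *)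

(* Defs.v *)
From HB Require Import structures.
From mathcomp Require Import all_boot all_order all_algebra.
From mathcomp Require Import all_classical all_reals all_analysis.
Set Implicit Arguments. Unset Strict Implicit. Unset Printing Implicit Defensive.
Import Order.TTheory GRing.Theory Num.Theory.
Local Open Scope classical_set_scope.
Local Open Scope ring_scope.

Section Defs.
Context (K : realType) (d : measure_display) (I : measurableType d)
  (mu : {measure set I -> \bar K}) (R : nat).

Definition qtot (q : 'I_R -> K) : K := \sum_(r < R) q r.

(* t_min = min_r t_r and t_max = max_r t_r (meaningful for R >= 1; the seed
   element is t of the first route, so it does not affect the value). *)
Definition tmin (t : 'I_R -> K) : K :=
  \big[Num.min/head 0 [seq t r | r <- enum 'I_R]]_(r < R) t r.
Definition tmax (t : 'I_R -> K) : K :=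
  \big[Num.max/head 0 [seq t r | r <- enum 'I_R]]_(r < R) t r.

Definition tbar (q t : 'I_R -> K) : K := (qtot q)^-1 * \sum_(r < R) q r * t r.

Definition Einv (gam : I -> K) : \bar K :=
  (((fine (mu setT))^-1)%:E * \int[mu]_(x in setT) ((gam x)^-1)%:E)%E.

Definition offer_profile (q t : 'I_R -> K) (T : I -> K) : Prop :=
  [/\ measurable_fun setT T,
      (forall i, tmin t <= T i <= tmax t) &
      (((fine (mu setT))^-1)%:E * \int[mu]_(x in setT) (T x)%:E)%E = (tbar q t)%:E].

Definition assignment_plan (q t : 'I_R -> K) (T : I -> K) (m : I -> 'I_R -> K)
  : Prop :=
  [/\ (forall r, measurable_fun setT (fun i => m i r)),
      (forall i r, 0 <= m i r <= 1),
      (forall r, (\int[mu]_(x in setT) (m x r)%:E)%E = (q r)%:E),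
      {ae mu, forall i, \sum_(r < R) m i r = 1} &
      {ae mu, forall i, \sum_(r < R) t r * m i r = T i}].

Definition feasible_offer (q t : 'I_R -> K) (T : I -> K) : Prop :=
  offer_profile q t T /\ exists m, assignment_plan q t T m.

End Defs.

(* Main.v *)
Set Warnings "-all".
Require Import Defs.
From HB Require Import structures.
From mathcomp Require Import all_boot all_order all_algebra.
From mathcomp Require Import all_classical all_reals all_analysis.
From mathcomp Require Import ring lra.
Import Order.TTheory GRing.Theory Num.Theory.
Local Open Scope classical_set_scope.
Local Open Scope ring_scope.

Section Helpers.
Context (K : realType) (d : measure_display) (I : measurableType d)
  (mu : {measure set I -> \bar K}).

Lemma bnd_int (f : I -> K) (a b : K) : (mu setT < +oo)%E ->
  measurable_fun setT f -> (forall x, a <= f x <= b) ->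
  mu.-integrable setT (EFin \o f).
Proof.
move=> mfin mf hb; apply/integrableP; split; first exact/measurable_realfun.measurable_EFinP.
apply: (le_lt_trans (integral_le_bound (`|a| + `|b|)%:E _ _ _ _)) => //.
- by apply/measurable_realfun.measurable_EFinP.
- apply: aeW => x _; rewrite /= lee_fin ler_norml.
  have := ler_norm a; have := ler_norm (-a); have := ler_norm b;
  have := ler_norm (-b); rewrite !normrN.
  by case/andP: (hb x) => h1 h2 *; apply/andP; split; lra.
- by apply: lte_mul_pinfty => //; rewrite lee_fin addr_ge0.
Qed.

Lemma int_fin (f : I -> K) : mu.-integrable setT (EFin \o f) ->
  (\int[mu]_(x in setT) (f x)%:E)%E = (Rintegral mu setT f)%:E.
Proof. by move=> h; rewrite /Rintegral fineK //; exact: integrable_fin_num. Qed.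

Lemma lin_int (g : I -> K) (al be : K) : (mu setT < +oo)%E ->
  mu.-integrable setT (EFin \o g) ->
  mu.-integrable setT (EFin \o (fun x => al + be * g x)) /\
  Rintegral mu setT (fun x => al + be * g x) =
    al * fine (mu setT) + be * Rintegral mu setT g.
Proof.
move=> muf gI.
have cI : mu.-integrable setT (EFin \o (fun=> al)).
  apply: (bnd_int _ al al muf (measurable_cst al)) => x /=.
  by rewrite lexx.
have bI : mu.-integrable setT (EFin \o (fun x => be * g x)).
  have -> : EFin \o (fun x => be * g x) = (fun x => (be%:E * (EFin \o g) x)%E).
    by apply/funext => x /=; rewrite EFinM.
  exact: integrableZl.
split.
  have -> : EFin \o (fun x => al + be * g x) =
    ((EFin \o (fun=> al)) \+ (EFin \o (fun x => (be * g x)%R)))%E.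
    by apply/funext => x /=; rewrite EFinD.
  exact: integrableD.
by rewrite RintegralD // RintegralZl // Rintegral_cst.
Qed.

End Helpers.
Arguments bnd_int {K d I mu f a b}.
Arguments int_fin {K d I mu f}.
Arguments lin_int {K d I mu g}.

Lemma frac01 (K : realType) (x a b : K) : a != b ->
  Num.min a b <= x <= Num.max a b -> 0 <= (x - b) / (a - b) <= 1.
Proof.
move=> ab; case/orP: (lt_total ab) => h.
  have e1 : Num.min a b = a by apply: le_anti; rewrite ge_min lexx le_min lexx (ltW h).
  have e2 : Num.max a b = b by apply: le_anti; rewrite ge_max lexx (ltW h) le_max lexx orbT.
  rewrite e1 e2 => /andP[h1 h2].
  have hp : 0 < b - a by rewrite subr_gt0.
  rewrite -mulrNN -invrN !opprB; apply/andP; split.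
    by apply: divr_ge0; rewrite subr_ge0 // ltW.
  by rewrite ler_pdivrMr // mul1r lerB.
have e1 : Num.min a b = b by apply: le_anti; rewrite ge_min lexx orbT le_min lexx (ltW h).
have e2 : Num.max a b = a by apply: le_anti; rewrite ge_max lexx (ltW h) le_max lexx.
rewrite e1 e2 => /andP[h1 h2].
have hp : 0 < a - b by rewrite subr_gt0.
apply/andP; split.
  by apply: divr_ge0; rewrite subr_ge0 // ltW.
by rewrite ler_pdivrMr // mul1r lerB.
Qed.

Lemma tmin_gt0 (K : realType) (R : nat) (t : 'I_R -> K) :
  (0 < R)%N -> (forall r, 0 < t r) -> 0 < tmin t.
Proof.
case: R t => [//|R] t _ tp; rewrite /tmin.
apply: (big_ind (fun x => 0 < x)).
- by rewrite enum_ordSl /=.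
- by move=> x y hx hy; rewrite lt_min hx hy.
- by move=> r _.
Qed.

Lemma sum2 (K : realType) (F : 'I_2 -> K) : \sum_(r < 2) F r = F ord0 + F ord_max.
Proof.
rewrite big_ord_recl big_ord_recl big_ord0 addr0; congr (_ + F _).
exact: val_inj.
Qed.

Lemma tmin2 (K : realType) (t : 'I_2 -> K) : tmin t = Num.min (t ord0) (t ord_max).
Proof.
rewrite /tmin enum_ordSl /= big_ord_recl big_ord_recl big_ord0.
have -> : lift ord0 ord0 = ord_max :> 'I_2 by exact: val_inj.
by rewrite [Num.min (t ord_max) _]minC min_minxK.
Qed.

Lemma tmax2 (K : realType) (t : 'I_2 -> K) : tmax t = Num.max (t ord0) (t ord_max).
Proof.
rewrite /tmax enum_ordSl /= big_ord_recl big_ord_recl big_ord0.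
have -> : lift ord0 ord0 = ord_max :> 'I_2 by exact: val_inj.
by rewrite [Num.max (t ord_max) _]maxC max_maxxK.
Qed.

Lemma qtot_Rpos (K : realType) (R : nat) (q : 'I_R -> K) : 0 < qtot q -> (0 < R)%N.
Proof. by case: R q => [q|//]; rewrite /qtot big_ord0 ltxx. Qed.

Lemma ord2 (r : 'I_2) : r = ord0 \/ r = ord_max.
Proof.
case: r => [[|[|n]] p]; [left|right|by []]; exact: val_inj.
Qed.

Theorem proposition4 (K : realType) (d : measure_display) (I : measurableType d)
  (mu : {measure set I -> \bar K}) (R : nat) (q t : 'I_R -> K) (gam : I -> K) :
  (forall r, 0 <= q r) ->
  (forall r, 0 < t r) ->
  0 < qtot q ->
  mu setT = (qtot q)%:E ->
  measurable_fun setT gam ->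
  (forall i, 0 < gam i) ->
  ((exists T : I -> K, feasible_offer mu q t T /\
      (forall i, gam i * T i <= tmin t)) ->
     ((tbar q t)%:E <= (tmin t)%:E * Einv mu gam)%E)
  /\
  (R = 2%N ->
   (forall i, tmin t / tmax t <= gam i <= 1) ->
   ((tbar q t)%:E <= (tmin t)%:E * Einv mu gam)%E ->
   exists T : I -> K, feasible_offer mu q t T /\
      (forall i, gam i * T i <= tmin t)).
Proof.
move=> q0 t0 Q0 muT mg g0.
have Rpos := @qtot_Rpos K R q Q0.
have tm0 := @tmin_gt0 K R t Rpos t0.
have fmu : fine (mu setT) = qtot q by rewrite muT.
have mginv : measurable_fun setT (fun x => (gam x)^-1).
  have -> : (fun x => (gam x)^-1) = (fun x => gam x `^ (-1)).
    by apply/funext => x; rewrite powR_inv1 // ltW.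
  exact: measurableT_comp (measurable_realfun.measurable_powR _) mg.
split.
  case=> T [[[mT Tb Tint] _] gT].
  rewrite /Einv -Tint fmu muleCA.

  apply: lee_wpmul2l; first by rewrite lee_fin invr_ge0 ltW.
  rewrite -ge0_integralZl_EFin //; last exact: ltW.
  - apply: ge0_le_integral => //.
    + by move=> x _; rewrite lee_fin (le_trans (ltW tm0)) //; case/andP: (Tb x).
    + exact/measurable_realfun.measurable_EFinP.
    + by apply: measurable_funeM; exact/measurable_realfun.measurable_EFinP.
    + move=> x _; rewrite -EFinM lee_fin -(ler_pM2l (g0 x)) mulrCA mulfV ?gt_eqF //.
      by rewrite mulr1.
  - by move=> x _; rewrite lee_fin invr_ge0 ltW.
  - exact/measurable_realfun.measurable_EFinP.
move=> R2; subst R => gb hE.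
have hQ : qtot q = q ord0 + q ord_max by rewrite /qtot sum2.
have htb : tbar q t = (qtot q)^-1 * (q ord0 * t ord0 + q ord_max * t ord_max).
  by rewrite /tbar sum2.
have hm := @tmin2 K t; have hM := @tmax2 K t.
set Q := qtot q in Q0 muT fmu hQ htb hE gb *.
set tm := tmin t in tm0 hm hE gb *.
set tM := tmax t in hM gb *.
set B := q ord0 * t ord0 + q ord_max * t ord_max in htb.
have tm_0 : tm <= t ord0 by rewrite hm ge_min lexx.
have tm_1 : tm <= t ord_max by rewrite hm ge_min lexx orbT.
have tM_0 : t ord0 <= tM by rewrite hM le_max lexx.
have tM_1 : t ord_max <= tM by rewrite hM le_max lexx orbT.
have tmE : tm = t ord0 \/ tm = t ord_max.
  case: (leP (t ord0) (t ord_max)) => h; [left|right]; apply/le_anti.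
    by rewrite tm_0 hm le_min lexx h.
  by rewrite tm_1 hm le_min lexx (ltW h).
have tME : tM = t ord0 \/ tM = t ord_max.
  case: (leP (t ord0) (t ord_max)) => h; [right|left]; apply/le_anti.
    by rewrite tM_1 hM ge_max lexx h.
  by rewrite tM_0 hM ge_max lexx (ltW h).
have tmM : tm <= tM by exact: le_trans tm_0 tM_0.
have tM0 : 0 < tM by exact: lt_le_trans tm0 tmM.
have muf : (mu setT < +oo)%E by rewrite muT ltry.
have Qn0 : Q != 0 by rewrite gt_eqF.
set ginv := fun x => (gam x)^-1.
have gib x : 1 <= ginv x <= tM / tm.
  case/andP: (gb x) => h1 h2; apply/andP; split; first by rewrite invf_ge1.
  by rewrite /ginv -invf_div lef_pV2 // posrE ?divr_gt0.
have ginvI : mu.-integrable setT (EFin \o ginv).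
  by exact: (bnd_int muf mginv gib).
set U := fun x => tm * ginv x.
have mU : measurable_fun setT U by exact: (measurable_realfun.measurable_funM (measurable_cst tm) mginv).
have Ub x : tm <= U x <= tM.
  case/andP: (gib x) => h1 h2; rewrite /U; apply/andP; split.
    by rewrite -{1}[tm]mulr1 ler_pM2l.
  by rewrite -ler_pdivlMl // mulrC.
have UI : mu.-integrable setT (EFin \o U) by exact: (bnd_int muf mU Ub).
have cI (c : K) : mu.-integrable setT (EFin \o (fun=> c)).
  by apply: (bnd_int (a:=c) (b:=c) muf (measurable_cst c)) => x /=; rewrite lexx.
set A := Rintegral mu setT U.
have hA : A = tm * Rintegral mu setT ginv by rewrite /A /U RintegralZl.
have hcst (c : K) : Rintegral mu setT (fun=> c) = c * Q by rewrite Rintegral_cst // fmu.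
have tmQA : tm * Q <= A.
  rewrite -hcst /A; apply: le_Rintegral => // x _; by case/andP: (Ub x).
have BA : B <= A.
  move: hE; rewrite /Einv fmu (int_fin ginvI) -!EFinM lee_fin htb hA.
  by rewrite mulrCA ler_pM2l ?invr_gt0.
have tmB : tm * Q <= B.
  rewrite hQ /B mulrDr; apply: lerD; rewrite mulrC ler_wpM2l //.
set lam := (B - tm * Q) / (A - tm * Q).
have lam0 : 0 <= lam by rewrite divr_ge0 // subr_ge0.
have lam1 : lam <= 1.
  have [AE|AN] := eqVneq (A - tm * Q) 0; first by rewrite /lam AE invr0 mulr0.
  have AP : 0 < A - tm * Q by rewrite lt_def AN subr_ge0.
  by rewrite /lam ler_pdivrMr // mul1r lerB.
have lamE : lam * (A - tm * Q) = B - tm * Q.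
  have [AE|AN] := eqVneq (A - tm * Q) 0; last by rewrite /lam divfK.
  rewrite AE mulr0; apply/esym/eqP; rewrite subr_eq0 eq_le tmB andbT.
  by move/eqP: AE; rewrite subr_eq0 => /eqP <-.
set T := fun x => tm + lam * (U x - tm).
have mUc : measurable_fun setT (fun x => U x - tm).
  exact: (measurable_realfun.measurable_funB mU (measurable_cst tm)).
have mT : measurable_fun setT T.
  exact: (measurable_realfun.measurable_funD (measurable_cst tm)
    (measurable_realfun.measurable_funM (measurable_cst lam) mUc)).
have Tb x : tm <= T x <= U x.
  case/andP: (Ub x) => h1 h2; rewrite /T; apply/andP; split.
    by rewrite lerDl mulr_ge0 // subr_ge0.
  have h : lam * (U x - tm) <= U x - tm by rewrite ler_piMl // subr_ge0.
  lra.
have TI : mu.-integrable setT (EFin \o T).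
  apply: (bnd_int (a:=tm) (b:=tM) muf mT) => x.
  case/andP: (Tb x) => h1 h2; case/andP: (Ub x) => h3 h4; apply/andP; split => //.
  exact: le_trans h2 h4.
have UcI : mu.-integrable setT (EFin \o (fun x => U x - tm)).
  apply: (bnd_int (a:=0) (b:=tM) muf mUc) => x.
  case/andP: (Ub x) => h1 h2; rewrite subr_ge0 h1 /=.
  by rewrite lerBlDr (le_trans h2) // lerDl ltW.
have intT : Rintegral mu setT T = B.
  rewrite /T RintegralD //; last first.
    apply: (bnd_int (a:=0) (b:=tM) muf
      (measurable_realfun.measurable_funM (measurable_cst lam) mUc)) => x /=.
    case/andP: (Ub x) => h1 h2.
    have h : lam * (U x - tm) <= U x - tm by rewrite ler_piMl // subr_ge0.
    rewrite mulr_ge0 ?subr_ge0 //=; lra.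
  rewrite RintegralZl // RintegralB // hcst -/A lamE.
  by rewrite subrKC.
have gU x : gam x * U x = tm.
  by rewrite /U /ginv mulrCA mulfV ?gt_eqF // mulr1.
exists T; split; last first.
  move=> x; rewrite -(gU x) ler_pM2l //; by case/andP: (Tb x).
split.
  split => //.
  - move=> x; case/andP: (Tb x) => -> h /=.
    by case/andP: (Ub x) => _; exact: le_trans.
  - by rewrite fmu (int_fin TI) intT -EFinM htb.
set tb := tbar q t.
set D := t ord0 - t ord_max.
set c := fun r : 'I_2 => if r == ord0 then D^-1 else - D^-1.
exists (fun x r => q r / Q + c r * (T x - tb)).
have TbI : mu.-integrable setT (EFin \o (fun x => T x - tb)).
  have -> : (fun x => T x - tb) = (fun x => - tb + 1 * T x).
    by apply/funext => x; rewrite mul1r addrC.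
  by case: (lin_int (- tb) 1 muf TI).
have intTb : Rintegral mu setT (fun x => T x - tb) = 0.
  have -> : (fun x => T x - tb) = (fun x => - tb + 1 * T x).
    by apply/funext => x; rewrite mul1r addrC.
  case: (lin_int (- tb) 1 muf TI) => _ ->; rewrite mul1r intT fmu /tb htb.
  by rewrite mulNr mulrAC mulVf // mul1r addNr.
have mTb : measurable_fun setT (fun x => T x - tb).
  exact: (measurable_realfun.measurable_funB mT (measurable_cst tb)).
have sq : q ord0 / Q + q ord_max / Q = 1 by rewrite -mulrDl -hQ mulfV.
have Tmm x : Num.min (t ord0) (t ord_max) <= T x <= Num.max (t ord0) (t ord_max).
  rewrite -hm -hM; case/andP: (Tb x) => -> h /=.
  by case/andP: (Ub x) => _; exact: le_trans.
have c0 : c ord0 = D^-1 by [].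
have c1 : c ord_max = - D^-1 by [].
split.
- move=> r.
  exact: (measurable_realfun.measurable_funD (measurable_cst _)
    (measurable_realfun.measurable_funM (measurable_cst _) mTb)).
- move=> x r.
  have [D0|Dn0] := eqVneq D 0.
    have -> : c r = 0 by rewrite /c D0 invr0 oppr0; case: ifP.
    rewrite mul0r addr0; apply/andP; split; first by rewrite divr_ge0 // ltW.
    rewrite ler_pdivrMr // mul1r hQ.
    case: (ord2 r) => ->; [rewrite lerDl|rewrite lerDr]; exact: q0.
  have tn : t ord0 != t ord_max by rewrite -subr_eq0.
  have e0 : q ord0 / Q + c ord0 * (T x - tb) = (T x - t ord_max) / D.
    rewrite c0 /tb htb /B /D hQ; field.
    by rewrite subr_eq0 tn -hQ Qn0.
  have e1 : q ord_max / Q + c ord_max * (T x - tb) = 1 - (T x - t ord_max) / D.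
    rewrite -e0 c0 c1 mulNr; lra.
  have := @frac01 K _ _ _ tn (Tmm x); rewrite -/D => /andP[h1 h2].
  case: (ord2 r) => ->; [rewrite e0 | rewrite e1]; apply/andP; split; lra.
- move=> r.
  case: (lin_int (q r / Q) (c r) muf TbI) => rI hR.
  by rewrite (int_fin rI) hR intTb mulr0 addr0 fmu divfK.
- apply: aeW => x; rewrite sum2 c0 c1 mulNr; lra.
- apply: aeW => x; rewrite sum2 c0 c1.
  have [D0|Dn0] := eqVneq D 0.
    rewrite D0 invr0 oppr0 !mul0r !addr0.
    have e : t ord_max = t ord0 by apply/esym/eqP; rewrite -subr_eq0 -/D D0.
    have mm : Num.min (t ord0) (t ord_max) = t ord0 by rewrite e minxx.
    have MM : Num.max (t ord0) (t ord_max) = t ord0 by rewrite e maxxx.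
    have := Tmm x; rewrite mm MM -eq_le => /eqP <-.
    by rewrite e -mulrDr sq mulr1.
  have tn : t ord0 != t ord_max by rewrite -subr_eq0.
  rewrite /tb htb /B /D hQ; field.
  by rewrite subr_eq0 tn -hQ Qn0.
Qed.
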